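(* For every integer $\ell\geq 1$ there is a first-order prenex sentence $\sigma_\ell$ over $\tau_{\mathsf{ord}}$ with exactly $q^*(\ell)$ quantifiers that separates $L_{\leq\ell}$ from $L_{>\ell}$, and whose quantifier prefix strictly alternates between $\exists$ and $\forall$ and ends with $\forall$.
   Context: Vocabulary $\tau_{\mathsf{ord}} = \langle < ;\ \mathsf{min}, \mathsf{max}\rangle$ with $<$ binary and $\mathsf{min},\mathsf{max}$ constants. For $\ell \geq 1$, $L_\ell$ is the linear order with $\ell+1$ elements (its length is $\ell$), with $\mathsf{min},\mathsf{max}$ interpreted as first and last elements. $L_{\leq \ell}=\{L_1,\dots,L_\ell\}$, $L_{>\ell}=\{L_m: m>\ell\}$. A sentence separates $\mathcal{A}$ from $\mathcal{B}$ if it is true in all structures of $\mathcal{A}$ and false in all of $\mathcal{B}$. Define $q^*_\forall, q^*_\exists : \mathbb{Z}_{\geq 1}\to\mathbb{N}$ by $q^*_\forall(1)=1$, $q^*_\exists(1)=2$, $q^*_\forall(2)=2$, and $q^*_\exists(2\ell) = q^*_\forall(\ell)+1$ ($\ell\geq 1$); $q^*_\exists(2\ell+1) = q^*_\forall(\ell+1)+1$ ($\ell \geq 1$); $q^*_\forall(2\ell) = q^*_\exists(\ell)+1$ ($\ell\geq 2$); $q^*_\forall(2\ell+1) = q^*_\exists(\ell)+1$ ($\ell\geq 1$). Let $q^*(\ell) = \min(q^*_\exists(\ell), q^*_\forall(\ell))$. *)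

(* Defs.v *)
From mathcomp Require Import all_boot.
Set Implicit Arguments. Unset Strict Implicit. Unset Printing Implicit Defensive.

Inductive term : Type :=
| TVar of nat
| TMin
| TMax.

Inductive form : Type :=
| FLt of term & term
| FEq of term & term
| FNot of form
| FAnd of form & form
| FOr of form & form
| FEx of nat & form
| FAll of nat & form.

(** The structure L_m : linear order on {0,...,m} (m+1 elements),
    min = 0, max = m.  Assignments are maps nat -> nat. *)
Definition eval_term (m : nat) (rho : nat -> nat) (t : term) : nat :=
  match t with
  | TVar x => rho x
  | TMin => 0
  | TMax => m
  end.

Definition upd (rho : nat -> nat) (x a : nat) : nat -> nat :=
  fun y => if y == x then a else rho y.

Fixpoint sat (m : nat) (rho : nat -> nat) (f : form) : Prop :=
  match f with
  | FLt s t => eval_term m rho s < eval_term m rho t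
  | FEq s t => eval_term m rho s = eval_term m rho t
  | FNot g => ~ sat m rho g
  | FAnd g h => sat m rho g /\ sat m rho h
  | FOr g h => sat m rho g \/ sat m rho h
  | FEx x g => exists a, a <= m /\ sat m (upd rho x a) g
  | FAll x g => forall a, a <= m -> sat m (upd rho x a) g
  end.

(** Truth of a sentence in L_m (assignment irrelevant for sentences;
    we use the constant assignment to min). *)
Definition holds (m : nat) (f : form) : Prop := sat m (fun _ => 0) f.

Definition term_has (x : nat) (t : term) : bool :=
  if t is TVar y then y == x else false.

Fixpoint free (x : nat) (f : form) : bool :=
  match f with
  | FLt s t | FEq s t => term_has x s || term_has x t
  | FNot g => free x g
  | FAnd g h | FOr g h => free x g || free x h
  | FEx y g | FAll y g => (y != x) && free x g
  end.

Definition sentence (f : form) : Prop := forall x, free x f = false.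

Fixpoint qfree (f : form) : bool :=
  match f with
  | FLt _ _ | FEq _ _ => true
  | FNot g => qfree g
  | FAnd g h | FOr g h => qfree g && qfree h
  | FEx _ _ | FAll _ _ => false
  end.

Fixpoint prenex (f : form) : bool :=
  match f with
  | FEx _ g | FAll _ g => prenex g
  | g => qfree g
  end.

Fixpoint nquant (f : form) : nat :=
  match f with
  | FLt _ _ | FEq _ _ => 0
  | FNot g => nquant g
  | FAnd g h | FOr g h => nquant g + nquant h
  | FEx _ g | FAll _ g => (nquant g).+1
  end.

(** the leading quantifier prefix (true = exists, false = forall) *)
Fixpoint qprefix (f : form) : seq bool :=
  match f with
  | FEx _ g => true :: qprefix g
  | FAll _ g => false :: qprefix g
  | _ => [::]
  end.

Definition alternating (p : seq bool) : bool :=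
  if p is b :: p' then path (fun a c => a != c) b p' else true.

Definition ends_with_forall (p : seq bool) : bool :=
  if p is b :: p' then ~~ last b p' else false.

Definition separates_le_gt (l : nat) (f : form) : Prop :=
  (forall m, 1 <= m <= l -> holds m f) /\
  (forall m, l < m -> ~ holds m f).

(** * The functions q*_exists, q*_forall, q*.
    qaux fuel l = (q*_exists l, q*_forall l) for 1 <= l <= fuel:
    q*_E(1)=2, q*_A(1)=1, q*_A(2)=2,
    q*_E(l) = q*_A(ceil(l/2)) + 1  (l >= 2),
    q*_A(l) = q*_E(floor(l/2)) + 1 (l >= 3). *)
Fixpoint qaux (fuel l : nat) : nat * nat :=
  match fuel with
  | 0 => (0, 0)
  | fuel'.+1 =>
    if l <= 1 then (2, 1)
    else ((qaux fuel' (uphalf l)).2 + 1,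
          if l == 2 then 2 else (qaux fuel' l./2).1 + 1)
  end.

Definition qstarE (l : nat) : nat := (qaux l l).1.
Definition qstarA (l : nat) : nat := (qaux l l).2.
Definition qstar (l : nat) : nat := minn (qstarE l) (qstarA l).

Example qstar_vals :
  [seq (qstarE l, qstarA l) | l <- iota 1 8] =
  [:: (2,1); (2,2); (3,3); (3,3); (4,3); (4,4); (4,4); (4,4)].
Proof. by []. Qed.

(* Main.v *)
Require Import Defs.
From mathcomp Require Import all_boot zify.
From Stdlib Require Import Classical.
Set Implicit Arguments. Unset Strict Implicit. Unset Printing Implicit Defensive.

Lemma qaux_fuel : forall f f' n, 1 <= n -> n <= f -> n <= f' -> qaux f n = qaux f' n.
Proof.
elim=> [|f IH] [|f'] n Hn Hf Hf' //=; try lia.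
case: ifP => // Hn1.
rewrite (IH f' (uphalf n)) ?(IH f' n./2) //; lia.
Qed.

Lemma qE_rec n : 2 <= n -> qstarE n = (qstarA (uphalf n)).+1.
Proof.
move=> Hn; rewrite /qstarE /qstarA; case: n Hn => [|n] Hn //=.
rewrite ifN; last lia.
rewrite (@qaux_fuel n (uphalf n.+1) (uphalf n.+1)) /=; lia.
Qed.

Lemma qA_rec n : 3 <= n -> qstarA n = (qstarE n./2).+1.
Proof.
move=> Hn; rewrite /qstarE /qstarA; case: n Hn => [|n] Hn //=.
rewrite ifN; last lia. rewrite ifN; last lia.
rewrite (@qaux_fuel n (n.+1)./2 (n.+1)./2) /=; lia.
Qed.

Definition Inv (e a : nat) := e = a \/ (e = a + 1 /\ a %% 2 = 1) \/ (a = e + 1 /\ e %% 2 = 0).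
Definition Step (e a e2 a2 : nat) :=
  e2 + a2 = e + a \/ e2 + a2 = e + a + 1 \/ (e = 2 /\ a = 2 /\ e2 = 3 /\ a2 = 3).

Lemma inv_step l : 1 <= l ->
  Inv (qstarE l) (qstarA l) /\ Step (qstarE l) (qstarA l) (qstarE l.+1) (qstarA l.+1).
Proof.
move=> H1.
suff: forall L j, 1 <= j <= L -> Inv (qstarE j) (qstarA j) /\
   Step (qstarE j) (qstarA j) (qstarE j.+1) (qstarA j.+1) by move/(_ l l); apply; lia.
elim=> [|L IH] j Hj; first lia.
case: (leqP j 2) => Hj2.
  case: j Hj Hj2 => [|[|[|j]]] Hj Hj2; try lia; rewrite /Inv /Step /qstarE /qstarA /=; lia.
have HL : j <= L.+1 by lia.
have Hk1 := IH (j./2) ltac:(lia).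
have Hk2 := IH (j./2).+1 ltac:(lia).
move: Hk1 Hk2; rewrite /Inv /Step.
rewrite (qE_rec (n:=j)) ?(qA_rec (n:=j)) ?(qE_rec (n:=j.+1)) ?(qA_rec (n:=j.+1)); try lia.
have -> : uphalf j.+1 = (j./2).+1 by lia.
have -> : (j.+1)./2 = if odd j then (j./2).+1 else j./2 by case: (odd j) (@uphalf_half j) => /=; lia.
have : uphalf j = if odd j then (j./2).+1 else j./2 by case: (odd j) (@uphalf_half j) => /=; lia.
case: (odd j) => -> /=; lia.
Qed.

Definition EE n := qstarE n + qstarE n %% 2.
Definition AA n := qstarA n + (1 - qstarA n %% 2).

Lemma mono k : 1 <= k -> qstarE k <= qstarE k.+1 /\ qstarA k <= qstarA k.+1.
Proof.
move=> Hk; have [I1 S1] := inv_step Hk; have [I2 _] := inv_step (ltn0Sn k).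
move: I1 S1 I2; rewrite /Inv /Step; lia.
Qed.

Lemma AA_ge1 n : 1 <= AA n. Proof. rewrite /AA; lia. Qed.

Lemma EE_ge1 n : 1 <= n -> 1 <= EE n.
Proof.
move=> H; rewrite /EE; case: (leqP n 1) => H2.
  have -> : n = 1 by lia. by [].
rewrite qE_rec //; lia.
Qed.

Lemma EE1 : EE 1 = 2. Proof. by []. Qed.
Lemma AA1 : AA 1 = 1. Proof. by []. Qed.
Lemma EA2 : EE 2 + 1 <= AA 2. Proof. by []. Qed.

Lemma F3 n : 3 <= n -> EE n./2 + 1 <= AA n /\ EE (n.-1 - n./2) + 1 <= AA n.
Proof.
move=> Hn; rewrite /AA /EE qA_rec //.
have Hm : qstarE (n.-1 - n./2) <= qstarE n./2.
  case: (eqVneq (n.-1 - n./2) n./2) => [->//|H].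
  have E : n./2 = (n.-1 - n./2).+1 by lia.
  by case: (mono (k := n.-1 - n./2) ltac:(lia)); rewrite -E.
lia.
Qed.

Lemma F4 n : 2 <= n -> AA (uphalf n) + 1 <= EE n /\ AA n./2 + 1 <= EE n.
Proof.
move=> Hn; rewrite /AA /EE qE_rec //.
have Hm : qstarA n./2 <= qstarA (uphalf n).
  case: (eqVneq (uphalf n) n./2) => [->//|H].
  have E : uphalf n = (n./2).+1 by lia.
  by case: (mono (k := n./2) ltac:(lia)); rewrite -E.
lia.
Qed.

Lemma final_num l : 1 <= l ->
  (qstar l %% 2 = 1 /\ AA l <= qstar l) \/ (qstar l %% 2 = 0 /\ EE l <= qstar l).
Proof.
move=> Hl; have [I _] := inv_step Hl; move: I; rewrite /Inv /qstar /AA /EE; lia.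
Qed.

Fixpoint pre (f : form) : seq (bool * nat) :=
  match f with
  | FEx x g => (true, x) :: pre g
  | FAll x g => (false, x) :: pre g
  | _ => [::]
  end.

Definition pvars f := map snd (pre f).

Fixpoint mapM (F : form -> form) (f : form) : form :=
  match f with
  | FEx x g => FEx x (mapM F g)
  | FAll x g => FAll x (mapM F g)
  | g => F g
  end.

Definition orQF g f := mapM (FOr g) f.
Definition andQF g f := mapM (FAnd g) f.

Fixpoint mux (g f1 f2 : form) : form :=
  match f1, f2 with
  | FEx x h1, FEx _ h2 => FEx x (mux g h1 h2)
  | FAll x h1, FAll _ h2 => FAll x (mux g h1 h2)
  | _, _ => FOr (FAnd g f1) (FAnd (FNot g) f2)
  end.

Definition tok (d : nat) (t : term) : bool :=
  if t is TVar x then x < d else true.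

Lemma eval_ext m rho rho' t :
  (forall x, term_has x t -> rho x = rho' x) -> eval_term m rho t = eval_term m rho' t.
Proof. by case: t => //= x H; apply: H; rewrite /= eqxx. Qed.

Lemma sat_ext m f : forall rho rho', (forall x, free x f -> rho x = rho' x) ->
  (sat m rho f <-> sat m rho' f).
Proof.
elim: f => [s t|s t|g IH|g IHg h IHh|g IHg h IHh|x g IH|x g IH] rho rho' H /=.
- rewrite (@eval_ext m rho rho' s) ?(@eval_ext m rho rho' t) // => y Hy; apply: H => /=;
  by rewrite Hy ?orbT.
- rewrite (@eval_ext m rho rho' s) ?(@eval_ext m rho rho' t) // => y Hy; apply: H => /=;
  by rewrite Hy ?orbT.
- by rewrite (IH rho rho').
- by rewrite (IHg rho rho') ?(IHh rho rho') // => y Hy; apply: H; rewrite /= Hy ?orbT.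
- by rewrite (IHg rho rho') ?(IHh rho rho') // => y Hy; apply: H; rewrite /= Hy ?orbT.
- have E : forall a, sat m (upd rho x a) g <-> sat m (upd rho' x a) g.
    move=> a; apply: IH => y Hy; rewrite /upd; case: eqP => // /eqP ne.
    by apply: H; rewrite /= Hy eq_sym ne.
  by split; case=> a [Ha Hs]; exists a; split => //; apply/E.
- have E : forall a, sat m (upd rho x a) g <-> sat m (upd rho' x a) g.
    move=> a; apply: IH => y Hy; rewrite /upd; case: eqP => // /eqP ne.
    by apply: H; rewrite /= Hy eq_sym ne.
  by split=> Hs a Ha; apply/E; apply: Hs.
Qed.

Lemma sat_upd_nf m rho g v a : free v g = false ->
  (sat m (upd rho v a) g <-> sat m rho g).
Proof.
move=> Hv; apply: sat_ext => x Hx; rewrite /upd; case: eqP => // E.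
by move: Hx; rewrite E Hv.
Qed.

Lemma th_tok v d t : term_has v t -> tok d t -> v < d.
Proof. by case: t => //= x /eqP ->. Qed.

Lemma eval_upd_tok m rho d z t : tok d t -> eval_term m (upd rho d z) t = eval_term m rho t.
Proof. case: t => //= x Hx; rewrite /upd; case: eqP => // E; lia. Qed.

Lemma sat_orQF m g f : forall rho, (forall v, v \in pvars f -> free v g = false) ->
  (sat m rho (orQF g f) <-> sat m rho g \/ sat m rho f).
Proof.
rewrite /orQF.
elim: f => [s t|s t|h _|h1 _ h2 _|h1 _ h2 _|x h IH|x h IH] rho Hv //=.
- have Hx : free x g = false by apply: Hv; rewrite /pvars /= inE eqxx.
  have Hv' : forall v, v \in pvars h -> free v g = false.
    by move=> v Hin; apply: Hv; rewrite /pvars /= inE Hin orbT.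
  split.
  + case=> a [Ha]; rewrite IH // sat_upd_nf //; case=> H; first by left.
    by right; exists a.
  + case=> [H|[a [Ha H]]]; [exists 0|exists a]; split => //; rewrite IH // sat_upd_nf //; by [left|right].
- have Hx : free x g = false by apply: Hv; rewrite /pvars /= inE eqxx.
  have Hv' : forall v, v \in pvars h -> free v g = false.
    by move=> v Hin; apply: Hv; rewrite /pvars /= inE Hin orbT.
  split.
  + move=> H; case: (classic (sat m rho g)) => Hg; first by left.
    right=> a Ha; move: (H a Ha); rewrite IH // sat_upd_nf //; by case.
  + case=> [H|H] a Ha; rewrite IH // sat_upd_nf //; by [left|right; apply: H].
Qed.

Lemma sat_andQF m g f : forall rho, (forall v, v \in pvars f -> free v g = false) ->
  (sat m rho (andQF g f) <-> sat m rho g /\ sat m rho f).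
Proof.
rewrite /andQF.
elim: f => [s t|s t|h _|h1 _ h2 _|h1 _ h2 _|x h IH|x h IH] rho Hv //=.
- have Hx : free x g = false by apply: Hv; rewrite /pvars /= inE eqxx.
  have Hv' : forall v, v \in pvars h -> free v g = false.
    by move=> v Hin; apply: Hv; rewrite /pvars /= inE Hin orbT.
  split.
  + case=> a [Ha]; rewrite IH // sat_upd_nf //; case=> H1 H2; split => //.
    by exists a.
  + move=> [H [a [Ha H2]]]; exists a; split => //.
    by rewrite IH // sat_upd_nf.
- have Hx : free x g = false by apply: Hv; rewrite /pvars /= inE eqxx.
  have Hv' : forall v, v \in pvars h -> free v g = false.
    by move=> v Hin; apply: Hv; rewrite /pvars /= inE Hin orbT.
  split.
  + move=> H; split.
      by move: (H 0 (leq0n m)); rewrite IH // sat_upd_nf //; case.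
    by move=> a Ha; move: (H a Ha); rewrite IH // sat_upd_nf //; case.
  + case=> [H1 H2] a Ha; rewrite IH // sat_upd_nf //; split => //; exact: H2.
Qed.

Lemma sat_mux m g f1 : forall f2 rho, pre f1 = pre f2 ->
  (forall v, v \in pvars f1 -> free v g = false) ->
  (sat m rho (mux g f1 f2) <-> (sat m rho g /\ sat m rho f1) \/ (~ sat m rho g /\ sat m rho f2)).
Proof.
elim: f1 => [s t|s t|h _|h1 _ h2 _|h1 _ h2 _|x h IH|x h IH] f2 rho Hp Hv //=;
  case: f2 Hp => //= y k [<-] Hp.
- have Hx : free x g = false by apply: Hv; rewrite /pvars /= inE eqxx.
  have Hv' : forall v, v \in pvars h -> free v g = false.
    by move=> v Hin; apply: Hv; rewrite /pvars /= inE Hin orbT.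
  have Eg : forall a, sat m (upd rho x a) g <-> sat m rho g by move=> a; apply: sat_upd_nf.
  split.
  + case=> a [Ha] /(IH _ _ Hp Hv') [[/Eg Hg H]|[Hg H]].
      by left; split => //; exists a.
    by right; split; [move=> /Eg|exists a].
  + case=> [[Hg [a [Ha H]]]|[Hg [a [Ha H]]]]; exists a; split => //;
      apply/(IH _ _ Hp Hv'); [left|right]; split => //; [by apply/Eg| by move/Eg].
- have Hx : free x g = false by apply: Hv; rewrite /pvars /= inE eqxx.
  have Hv' : forall v, v \in pvars h -> free v g = false.
    by move=> v Hin; apply: Hv; rewrite /pvars /= inE Hin orbT.
  have Eg : forall a, sat m (upd rho x a) g <-> sat m rho g by move=> a; apply: sat_upd_nf.
  split.
  + move=> H; case: (classic (sat m rho g)) => Hg; [left|right]; split => // a Ha;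
      move: (H a Ha) => /(IH _ _ Hp Hv'); rewrite !Eg; tauto.
  + case=> [[Hg H]|[Hg H]] a Ha; apply/(IH _ _ Hp Hv'); rewrite Eg; [left|right]; split => //;
      exact: H.
Qed.

Lemma pre_orQF g f : pre (orQF g f) = pre f.
Proof. by rewrite /orQF; elim: f => //= x h ->. Qed.
Lemma pre_andQF g f : pre (andQF g f) = pre f.
Proof. by rewrite /andQF; elim: f => //= x h ->. Qed.
Lemma pre_mux g f1 : forall f2, pre f1 = pre f2 -> pre (mux g f1 f2) = pre f1.
Proof.
elim: f1 => //= [x h IH|x h IH] [] //= y k [_ E]; by rewrite IH.
Qed.

Lemma qfree_nq f : qfree f -> nquant f = 0.
Proof. elim: f => //= [g IHg h IHh|g IHg h IHh] /andP[/IHg-> /IHh->] //. Qed.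

Definition good f := prenex f && (nquant f == size (pre f)).

Lemma good_nq f : pre f = [::] -> good f = qfree f.
Proof.
move=> Hp; rewrite /good Hp /=.
have -> : prenex f = qfree f by case: f Hp.
by case Hq: (qfree f) => //=; rewrite qfree_nq.
Qed.

Lemma good_ex x f : good (FEx x f) = good f.
Proof. by rewrite /good /= eqSS. Qed.
Lemma good_all x f : good (FAll x f) = good f.
Proof. by rewrite /good /= eqSS. Qed.

Lemma good_orQF g f : qfree g -> good f -> good (orQF g f).
Proof.
rewrite /orQF => Hg; elim: f => [s t|s t|h _|h1 _ h2 _|h1 _ h2 _|x h IH|x h IH];
  rewrite ?good_ex ?good_all //= => H;
  rewrite good_nq //= Hg; rewrite good_nq // in H.
Qed.

Lemma good_andQF g f : qfree g -> good f -> good (andQF g f).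
Proof.
rewrite /andQF => Hg; elim: f => [s t|s t|h _|h1 _ h2 _|h1 _ h2 _|x h IH|x h IH];
  rewrite ?good_ex ?good_all //= => H;
  rewrite good_nq //= Hg; rewrite good_nq // in H.
Qed.

Lemma good_mux g f1 : forall f2, qfree g -> good f1 -> good f2 -> pre f1 = pre f2 ->
  good (mux g f1 f2).
Proof.
elim: f1 => [s t|s t|h _|h1 _ h2 _|h1 _ h2 _|x h IH|x h IH] f2 Hg G1 G2 Hp.
6,7: by case: f2 G2 Hp => //= y k G2 [_ E]; rewrite ?good_ex ?good_all in G1 G2 *; apply: IH.
all: have P2 : pre f2 = [::] by rewrite -Hp.
all: rewrite good_nq //= in G1; rewrite good_nq // in G2.
all: by rewrite good_nq //= Hg /= G2 ?andbT.
Qed.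

Lemma free_mapM (F : form -> form) x g f :
  (forall M, free x (F M) -> pre M = [::] -> free x g || free x M) ->
  free x (mapM F f) -> (free x g && (x \notin pvars f)) || free x f.
Proof.
move=> HF; elim: f => [s t|s t|h _|h1 _ h2 _|h1 _ h2 _|y h IH|y h IH];
  try (by move/HF => /(_ erefl) /orP[H|H]; rewrite H ?orbT).
all: rewrite /pvars /= inE => /andP[Hy /IH /orP[/andP[-> Hn]|Hh]].
all: try (by rewrite Hy Hh orbT).
all: by rewrite (negbTE Hn) orbF eq_sym (negbTE Hy).
Qed.

Lemma free_orQF x g f : free x (orQF g f) -> (free x g && (x \notin pvars f)) || free x f.
Proof. by apply: free_mapM => M /=. Qed.
Lemma free_andQF x g f : free x (andQF g f) -> (free x g && (x \notin pvars f)) || free x f.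
Proof. by apply: free_mapM => M /=. Qed.

Lemma free_mux x g f1 : forall f2, pre f1 = pre f2 -> free x (mux g f1 f2) ->
  (free x g && (x \notin pvars f1)) || free x f1 || free x f2.
Proof.
elim: f1 => [s t|s t|h _|h1 _ h2 _|h1 _ h2 _|y h IH|y h IH] f2 Hp.
6,7: case: f2 Hp => //= z k [<- Hp]; rewrite /pvars /= inE => /andP[Hy /(IH _ Hp)];
  (case/orP=> [/orP[/andP[-> Hn]|Hh]|Hk];
   [by rewrite (negbTE Hn) orbF eq_sym (negbTE Hy) | by rewrite Hy Hh !orbT | by rewrite Hy Hk !orbT]).
all: have P2 : pre f2 = [::] by rewrite -Hp.
all: rewrite /pvars /= => /orP[/orP[H|H]|/orP[H|H]]; rewrite H ?orbT ?in_nil //=.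
Qed.

Definition fvb d f := forall x, free x f -> x < d.

Fixpoint pfx (b : bool) (c d : nat) : seq (bool * nat) :=
  if c is c'.+1 then (b, d) :: pfx (~~ b) c' d.+1 else [::].

Lemma pvars_pfx b c d : map snd (pfx b c d) = iota d c.
Proof. by elim: c b d => //= c IH b d; rewrite IH. Qed.

Definition ffalse := FLt TMin TMin.
Definition nbtw a b d := FNot (FAnd (FLt a (TVar d)) (FLt (TVar d) b)).
Definition gE a b d := FAnd (FLt a (TVar d)) (FNot (FLt b (TVar d))).
Definition gM d := FNot (FLt (TVar d) (TVar d.+1)).

Fixpoint buildA (c n : nat) (a b : term) (d : nat) {struct c} : form :=
  match c with
  | 0 => FEq TMin TMin
  | c'.+1 => FAll d (orQF (nbtw a b d)
      (match c' with
       | 0 => ffalse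
       | _ => if n <= 1 then buildE c' 1 a b d.+1
              else if n == 2 then buildE c' 2 a b d.+1
              else mux (gM d) (buildE c' n./2 a (TVar d) d.+1)
                              (buildE c' (n.-1 - n./2) (TVar d) b d.+1)
       end))
  end
with buildE (c n : nat) (a b : term) (d : nat) {struct c} : form :=
  match c with
  | 0 => FEq TMin TMin
  | c'.+1 => FEx d (andQF (gE a b d)
      (match c' with
       | 0 => ffalse
       | _ => if n <= 1 then buildA c' 1 a b d.+1
              else mux (gM d) (buildA c' (uphalf n) a (TVar d) d.+1)
                              (buildA c' n./2 (TVar d) b d.+1)
       end))
  end.

Definition bodyA c n a b d :=
  match c with
  | 0 => ffalse
  | _ => if n <= 1 then buildE c 1 a b d.+1
         else if n == 2 then buildE c 2 a b d.+1
         else mux (gM d) (buildE c n./2 a (TVar d) d.+1)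
                         (buildE c (n.-1 - n./2) (TVar d) b d.+1)
  end.

Definition bodyE c n a b d :=
  match c with
  | 0 => ffalse
  | _ => if n <= 1 then buildA c 1 a b d.+1
         else mux (gM d) (buildA c (uphalf n) a (TVar d) d.+1)
                         (buildA c n./2 (TVar d) b d.+1)
  end.

Lemma buildA_S c n a b d : buildA c.+1 n a b d = FAll d (orQF (nbtw a b d) (bodyA c n a b d)).
Proof. by []. Qed.
Lemma buildE_S c n a b d : buildE c.+1 n a b d = FEx d (andQF (gE a b d) (bodyE c n a b d)).
Proof. by []. Qed.

Lemma bodyA_S c n a b d : bodyA c.+1 n a b d =
  if n <= 1 then buildE c.+1 1 a b d.+1
  else if n == 2 then buildE c.+1 2 a b d.+1
  else mux (gM d) (buildE c.+1 n./2 a (TVar d) d.+1) (buildE c.+1 (n.-1 - n./2) (TVar d) b d.+1).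
Proof. by []. Qed.
Lemma bodyE_S c n a b d : bodyE c.+1 n a b d =
  if n <= 1 then buildA c.+1 1 a b d.+1
  else mux (gM d) (buildA c.+1 (uphalf n) a (TVar d) d.+1) (buildA c.+1 n./2 (TVar d) b d.+1).
Proof. by []. Qed.

Lemma pre_build c : forall n a b d,
  [/\ pre (buildA c n a b d) = pfx false c d, pre (buildE c n a b d) = pfx true c d,
      pre (bodyA c n a b d) = pfx true c d.+1 & pre (bodyE c n a b d) = pfx false c d.+1].
Proof.
elim: c => [|c IH] n a b d; first by [].
have HA : forall n a b d, pre (buildA c.+1 n a b d) = pfx false c.+1 d.
  by move=> n' a' b' d'; rewrite buildA_S /= pre_orQF; case: (IH n' a' b' d') => _ _ ->.
have HE : forall n a b d, pre (buildE c.+1 n a b d) = pfx true c.+1 d.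
  by move=> n' a' b' d'; rewrite buildE_S /= pre_andQF; case: (IH n' a' b' d') => _ _ _ ->.
split => //; rewrite /bodyA /bodyE.
- case: ifP => _; first exact: HE.
  case: ifP => _; first exact: HE.
  by rewrite pre_mux !HE.
- case: ifP => _; first exact: HA.
  by rewrite pre_mux !HA.
Qed.

Lemma good_build c : forall n a b d,
  [/\ good (buildA c n a b d), good (buildE c n a b d), good (bodyA c n a b d) & good (bodyE c n a b d)].
Proof.
elim: c => [|c IH] n a b d; first by [].
have HA : forall n a b d, good (buildA c.+1 n a b d).
  by move=> n' a' b' d'; rewrite buildA_S good_all; apply: good_orQF => //; case: (IH n' a' b' d').
have HE : forall n a b d, good (buildE c.+1 n a b d).
  by move=> n' a' b' d'; rewrite buildE_S good_ex; apply: good_andQF => //; case: (IH n' a' b' d').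
split => //; rewrite /bodyA /bodyE.
- case: ifP => _; first exact: HE.
  case: ifP => _; first exact: HE.
  by apply: good_mux => //; case: (pre_build c.+1 n./2 a (TVar d) d.+1) => _ -> _ _;
     case: (pre_build c.+1 (n.-1 - n./2) (TVar d) b d.+1) => _ -> _ _.
- case: ifP => _; first exact: HA.
  by apply: good_mux => //; case: (pre_build c.+1 (uphalf n) a (TVar d) d.+1) => -> _ _ _;
     case: (pre_build c.+1 n./2 (TVar d) b d.+1) => -> _ _ _.
Qed.

Lemma tokS d t : tok d t -> tok d.+1 t.
Proof. case: t => //= x; lia. Qed.

Lemma fvb_build c : forall n a b d, tok d a -> tok d b ->
  [/\ fvb d (buildA c n a b d), fvb d (buildE c n a b d),
      fvb d.+1 (bodyA c n a b d) & fvb d.+1 (bodyE c n a b d)].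
Proof.
elim: c => [|c IH] n a b d Ha Hb; first by split => x.
have HA : forall n a b d, tok d a -> tok d b -> fvb d (buildA c.+1 n a b d).
  move=> n' a' b' d' Ha' Hb' x; rewrite buildA_S /= => /andP[Hx /free_orQF /orP[/andP[Hg _]|Hb2]].
    move: Hg => /= /orP[/orP[H|H]|/orP[H|H]];
      first [exact: th_tok H Ha' | exact: th_tok H Hb' | by move: H Hx => /eqP ->; rewrite eqxx].
  case: (IH n' a' b' d' Ha' Hb') => _ _ /(_ x Hb2) H _; move: Hx; rewrite eq_sym; lia.
have HE : forall n a b d, tok d a -> tok d b -> fvb d (buildE c.+1 n a b d).
  move=> n' a' b' d' Ha' Hb' x; rewrite buildE_S /= => /andP[Hx /free_andQF /orP[/andP[Hg _]|Hb2]].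
    move: Hg => /= /orP[/orP[H|H]|/orP[H|H]];
      first [exact: th_tok H Ha' | exact: th_tok H Hb' | by move: H Hx => /eqP ->; rewrite eqxx].
  case: (IH n' a' b' d' Ha' Hb') => _ _ _ /(_ x Hb2) H; move: Hx; rewrite eq_sym; lia.
have Hd : tok d.+1 (TVar d) by rewrite /=.
split; [exact: HA|exact: HE| |]; rewrite ?bodyA_S ?bodyE_S.
- case: ifP => _; first exact: (HE _ _ _ _ (tokS Ha) (tokS Hb)).
  case: ifP => _; first exact: (HE _ _ _ _ (tokS Ha) (tokS Hb)).
  move=> x /free_mux; rewrite /pvars.
  case: (pre_build c.+1 n./2 a (TVar d) d.+1) => _ -> _ _;
  case: (pre_build c.+1 (n.-1 - n./2) (TVar d) b d.+1) => _ -> _ _ /(_ erefl).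
  case/orP=> [/orP[/andP[Hg Hn]|H]|H].
  + move: Hg Hn; rewrite pvars_pfx mem_iota => /= /orP[] /eqP <-; lia.
  + exact: (HE _ _ _ _ (tokS Ha) Hd x H).
  + exact: (HE _ _ _ _ Hd (tokS Hb) x H).
- case: ifP => _; first exact: (HA _ _ _ _ (tokS Ha) (tokS Hb)).
  move=> x /free_mux; rewrite /pvars.
  case: (pre_build c.+1 (uphalf n) a (TVar d) d.+1) => -> _ _ _;
  case: (pre_build c.+1 n./2 (TVar d) b d.+1) => -> _ _ _ /(_ erefl).
  case/orP=> [/orP[/andP[Hg Hn]|H]|H].
  + move: Hg Hn; rewrite pvars_pfx mem_iota => /= /orP[] /eqP <-; lia.
  + exact: (HA _ _ _ _ (tokS Ha) Hd x H).
  + exact: (HA _ _ _ _ Hd (tokS Hb) x H).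
Qed.

Lemma upd_eq rho d z : upd rho d z d = z.
Proof. by rewrite /upd eqxx. Qed.
Lemma upd_neq rho d e z : d != e -> upd rho e z d = rho d.
Proof. by rewrite /upd => /negbTE ->. Qed.

Lemma pvars_body c n a b d v :
  (v \in pvars (bodyA c n a b d) -> d < v) /\ (v \in pvars (bodyE c n a b d) -> d < v).
Proof.
rewrite /pvars; case: (pre_build c n a b d) => _ _ -> ->.
by rewrite !pvars_pfx !mem_iota; split => /andP[].
Qed.

Lemma pvars_build c n a b d v :
  (v \in pvars (buildA c n a b d) -> d <= v) /\ (v \in pvars (buildE c n a b d) -> d <= v).
Proof.
rewrite /pvars; case: (pre_build c n a b d) => -> -> _ _.
by rewrite !pvars_pfx !mem_iota; split => /andP[].
Qed.

Lemma free_nbtw v a b d : tok d a -> tok d b -> free v (nbtw a b d) -> v <= d.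
Proof.
move=> Ha Hb /= /orP[/orP[H|H]|/orP[H|H]];
  first [have := th_tok H Ha; lia | have := th_tok H Hb; lia | move: H => /= /eqP ->; lia].
Qed.
Lemma free_gE v a b d : tok d a -> tok d b -> free v (gE a b d) -> v <= d.
Proof.
move=> Ha Hb /= /orP[/orP[H|H]|/orP[H|H]];
  first [have := th_tok H Ha; lia | have := th_tok H Hb; lia | move: H => /= /eqP ->; lia].
Qed.
Lemma free_gM v d : free v (gM d) -> v <= d.+1.
Proof. by move=> /= /orP[] /eqP <-; lia. Qed.

Lemma sat_nbtw m rho d z a b : tok d a -> tok d b ->
  (sat m (upd rho d z) (nbtw a b d) <-> ~ (eval_term m rho a < z /\ z < eval_term m rho b)).
Proof. by move=> Ha Hb; rewrite /nbtw /= !eval_upd_tok // upd_eq. Qed.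

Lemma sat_gE m rho d z a b : tok d a -> tok d b ->
  (sat m (upd rho d z) (gE a b d) <-> (eval_term m rho a < z /\ ~ (eval_term m rho b < z))).
Proof. by move=> Ha Hb; rewrite /gE /= !eval_upd_tok // upd_eq. Qed.

Lemma sat_gM m rho d w : (sat m (upd rho d.+1 w) (gM d) <-> ~ (rho d < w)).
Proof. by rewrite /gM /= upd_eq upd_neq // neq_ltn ltnSn. Qed.

Lemma semA c n a b d m rho : tok d a -> tok d b ->
  (sat m rho (buildA c.+1 n a b d) <-> forall z, z <= m ->
     ~ (eval_term m rho a < z /\ z < eval_term m rho b) \/ sat m (upd rho d z) (bodyA c n a b d)).
Proof.
move=> Ha Hb; rewrite buildA_S /=.
have Hv : forall v, v \in pvars (bodyA c n a b d) -> free v (nbtw a b d) = false.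
  move=> v /(proj1 (pvars_body c n a b d v)) Hv; apply/negP => /(free_nbtw Ha Hb); lia.
split=> H z Hz; move: (H z Hz); rewrite sat_orQF // sat_nbtw //.
Qed.

Lemma semE c n a b d m rho : tok d a -> tok d b ->
  (sat m rho (buildE c.+1 n a b d) <-> exists w, w <= m /\
     (eval_term m rho a < w /\ ~ (eval_term m rho b < w)) /\ sat m (upd rho d w) (bodyE c n a b d)).
Proof.
move=> Ha Hb; rewrite buildE_S /=.
have Hv : forall v, v \in pvars (bodyE c n a b d) -> free v (gE a b d) = false.
  move=> v /(proj2 (pvars_body c n a b d v)) Hv; apply/negP => /(free_gE Ha Hb); lia.
by split; case=> w [Hw H]; exists w; split => //; move: H; rewrite sat_andQF // sat_gE.
Qed.

Lemma sat_muxE c h1 h2 a1 b1 a2 b2 d m rho :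
  tok d.+1 a1 -> tok d.+1 b1 -> tok d.+1 a2 -> tok d.+1 b2 ->
  (sat m rho (mux (gM d) (buildE c.+1 h1 a1 b1 d.+1) (buildE c.+1 h2 a2 b2 d.+1)) <->
   exists w, w <= m /\
     ((~ (rho d < w) /\ (eval_term m rho a1 < w /\ ~ (eval_term m rho b1 < w)) /\
         sat m (upd rho d.+1 w) (bodyE c h1 a1 b1 d.+1)) \/
      (~ ~ (rho d < w) /\ (eval_term m rho a2 < w /\ ~ (eval_term m rho b2 < w)) /\
         sat m (upd rho d.+1 w) (bodyE c h2 a2 b2 d.+1)))).
Proof.
move=> Ha1 Hb1 Ha2 Hb2; rewrite !buildE_S /=.
have Hp : pre (andQF (gE a1 b1 d.+1) (bodyE c h1 a1 b1 d.+1)) =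
          pre (andQF (gE a2 b2 d.+1) (bodyE c h2 a2 b2 d.+1)).
  rewrite !pre_andQF; case: (pre_build c h1 a1 b1 d.+1) => _ _ _ ->.
  by case: (pre_build c h2 a2 b2 d.+1) => _ _ _ ->.
have Hv : forall v, v \in pvars (andQF (gE a1 b1 d.+1) (bodyE c h1 a1 b1 d.+1)) -> free v (gM d) = false.
  move=> v; rewrite /pvars pre_andQF -/(pvars _) => /(proj2 (pvars_body c h1 a1 b1 d.+1 v)) Hv.
  by apply/negP => /free_gM; lia.
have Hv1 : forall v, v \in pvars (bodyE c h1 a1 b1 d.+1) -> free v (gE a1 b1 d.+1) = false.
  move=> v /(proj2 (pvars_body c h1 a1 b1 d.+1 v)) Hv'; apply/negP => /(free_gE Ha1 Hb1); lia.
have Hv2 : forall v, v \in pvars (bodyE c h2 a2 b2 d.+1) -> free v (gE a2 b2 d.+1) = false.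
  move=> v /(proj2 (pvars_body c h2 a2 b2 d.+1 v)) Hv'; apply/negP => /(free_gE Ha2 Hb2); lia.
by split; case=> w [Hw H]; exists w; split => //; move: H;
  rewrite sat_mux // !sat_andQF // sat_gM !sat_gE.
Qed.

Lemma sat_muxA c h1 h2 a1 b1 a2 b2 d m rho :
  tok d.+1 a1 -> tok d.+1 b1 -> tok d.+1 a2 -> tok d.+1 b2 ->
  (sat m rho (mux (gM d) (buildA c.+1 h1 a1 b1 d.+1) (buildA c.+1 h2 a2 b2 d.+1)) <->
   forall w, w <= m ->
     ((~ (rho d < w) /\ (~ (eval_term m rho a1 < w /\ w < eval_term m rho b1) \/
         sat m (upd rho d.+1 w) (bodyA c h1 a1 b1 d.+1))) \/
      (~ ~ (rho d < w) /\ (~ (eval_term m rho a2 < w /\ w < eval_term m rho b2) \/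
         sat m (upd rho d.+1 w) (bodyA c h2 a2 b2 d.+1))))).
Proof.
move=> Ha1 Hb1 Ha2 Hb2; rewrite !buildA_S /=.
have Hp : pre (orQF (nbtw a1 b1 d.+1) (bodyA c h1 a1 b1 d.+1)) =
          pre (orQF (nbtw a2 b2 d.+1) (bodyA c h2 a2 b2 d.+1)).
  rewrite !pre_orQF; case: (pre_build c h1 a1 b1 d.+1) => _ _ -> _.
  by case: (pre_build c h2 a2 b2 d.+1) => _ _ -> _.
have Hv : forall v, v \in pvars (orQF (nbtw a1 b1 d.+1) (bodyA c h1 a1 b1 d.+1)) -> free v (gM d) = false.
  move=> v; rewrite /pvars pre_orQF -/(pvars _) => /(proj1 (pvars_body c h1 a1 b1 d.+1 v)) Hv.
  by apply/negP => /free_gM; lia.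
have Hv1 : forall v, v \in pvars (bodyA c h1 a1 b1 d.+1) -> free v (nbtw a1 b1 d.+1) = false.
  move=> v /(proj1 (pvars_body c h1 a1 b1 d.+1 v)) Hv'; apply/negP => /(free_nbtw Ha1 Hb1); lia.
have Hv2 : forall v, v \in pvars (bodyA c h2 a2 b2 d.+1) -> free v (nbtw a2 b2 d.+1) = false.
  move=> v /(proj1 (pvars_body c h2 a2 b2 d.+1 v)) Hv'; apply/negP => /(free_nbtw Ha2 Hb2); lia.
by split => H w Hw; move: (H w Hw);
  rewrite sat_mux // !sat_orQF // sat_gM !sat_nbtw.
Qed.

Lemma AA_ge2 n : 2 <= n -> 2 <= AA n.
Proof.
move=> Hn; case: (leqP n 2) => H2.
  by have -> : n = 2 by lia.
have [H _] := F3 H2; have := EE_ge1 (n := n./2) ltac:(lia); lia.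
Qed.

Lemma build_ok c : forall n a b d m rho, 1 <= n -> tok d a -> tok d b ->
  (c %% 2 = 1 -> AA n <= c -> eval_term m rho a <= eval_term m rho b <= m ->
     (sat m rho (buildA c n a b d) <-> eval_term m rho b - eval_term m rho a <= n)) /\
  (c %% 2 = 0 -> EE n <= c -> eval_term m rho a < eval_term m rho b <= m ->
     (sat m rho (buildE c n a b d) <-> eval_term m rho b - eval_term m rho a <= n)).
Proof.
elim: c => [|c IH] n a b d m rho Hn Ha Hb.
  split => //; move=> _ HE; have := EE_ge1 Hn; lia.
set va := eval_term m rho a; set vb := eval_term m rho b.
have Eva : forall z, eval_term m (upd rho d z) a = va by move=> z; rewrite eval_upd_tok.
have Evb : forall z, eval_term m (upd rho d z) b = vb by move=> z; rewrite eval_upd_tok.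
have Evd : forall z, eval_term m (upd rho d z) (TVar d) = z by move=> z; rewrite /= upd_eq.
have Ha1 := tokS Ha; have Hb1 := tokS Hb.
have Hd1 : tok d.+1 (TVar d) by rewrite /=.
split.
- move=> Hc HA Hab; rewrite semA // -/va -/vb.
  case: c IH Hc HA => [|c] IH Hc HA.
  + have Hn1 : n = 1 by case: (leqP n 1) => H; [lia | have := AA_ge2 H; lia].
    split => [H|H z Hz]; last by left; lia.
    case: (leqP (vb - va) n) => // Hlt; exfalso.
    by case: (H va.+1 ltac:(lia)) => /= H1; lia.
  + rewrite bodyA_S; case: ifP => Hn1; [|case: ifP => /eqP Hn2].
    * have Hn1' : n = 1 by lia.
      have Hz : forall z, z <= m -> va < z < vb ->
          (sat m (upd rho d z) (buildE c.+1 1 a b d.+1) <-> vb - va <= 1).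
        move=> z Hz /andP[H1 H2]; case: (IH 1 a b d.+1 m (upd rho d z) (leqnn _) Ha1 Hb1) => _ HE.
        rewrite Eva Evb in HE; apply: HE; rewrite ?EE1; lia.
      split => [H|H z Hzm].
      - case: (leqP (vb - va) n) => // Hlt; exfalso.
        case: (H va.+1 ltac:(lia)) => H1; first lia.
        by move/(Hz va.+1 ltac:(lia) ltac:(lia)): H1; lia.
      - case: (boolP ((va < z) && (z < vb))) => Hb'; last by left => -[H1 H2]; rewrite H1 H2 in Hb'.
        by right; apply/(Hz _ Hzm Hb'); lia.
    * have Hz : forall z, z <= m -> va < z < vb ->
          (sat m (upd rho d z) (buildE c.+1 2 a b d.+1) <-> vb - va <= 2).
        move=> z Hz /andP[H1 H2]; case: (IH 2 a b d.+1 m (upd rho d z) ltac:(lia) Ha1 Hb1) => _ HE.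
        rewrite Eva Evb in HE; apply: HE; try lia; have := EA2; rewrite -Hn2; lia.
      split => [H|H z Hzm].
      - case: (leqP (vb - va) n) => // Hlt; exfalso.
        case: (H va.+1 ltac:(lia)) => H1; first lia.
        by move/(Hz va.+1 ltac:(lia) ltac:(lia)): H1; lia.
      - case: (boolP ((va < z) && (z < vb))) => Hb'; last by left => -[H1 H2]; rewrite H1 H2 in Hb'.
        by right; apply/(Hz _ Hzm Hb'); lia.
    * have Hn3 : 3 <= n by lia.
      have [F3a F3b] := F3 Hn3.
      have Hz : forall z, z <= m -> va < z < vb ->
          (sat m (upd rho d z) (mux (gM d) (buildE c.+1 n./2 a (TVar d) d.+1)
              (buildE c.+1 (n.-1 - n./2) (TVar d) b d.+1)) <-> z - va <= n./2 \/ vb - z <= (n.-1 - n./2)).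
        move=> z Hz /andP[H1 H2].
        case: (IH n./2 a (TVar d) d.+1 m (upd rho d z) ltac:(lia) Ha1 Hd1) => _ HE1.
        case: (IH (n.-1 - n./2) (TVar d) b d.+1 m (upd rho d z) ltac:(lia) Hd1 Hb1) => _ HE2.
        rewrite Eva Evb Evd in HE1 HE2.
        have E1 := HE1 ltac:(lia) ltac:(lia) ltac:(lia).
        have E2 := HE2 ltac:(lia) ltac:(lia) ltac:(lia).
        rewrite -E1 -E2.
        rewrite sat_muxE // !semE // Eva Evb Evd upd_eq.
        split.
        - case=> w [Hw [[Hg [Hg2 B]]|[Hg [Hg2 B]]]]; [left|right]; by exists w.
        - case=> [[w [Hw [Hg2 B]]]|[w [Hw [Hg2 B]]]]; exists w; split => //; [left|right];
            split => //; lia.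
      split => [H|H z Hzm].
      - case: (leqP (vb - va) n) => // Hlt; exfalso.
        case: (H (va + n./2).+1 ltac:(lia)) => H1; first lia.
        by move/(Hz (va + n./2).+1 ltac:(lia) ltac:(lia)): H1; lia.
      - case: (boolP ((va < z) && (z < vb))) => Hb'; last by left => -[H1 H2]; rewrite H1 H2 in Hb'.
        by right; apply/(Hz _ Hzm Hb'); lia.
- move=> Hc HE Hab; rewrite semE // -/va -/vb.
  case: c IH Hc HE => [|c] IH Hc HE; first by [].
  rewrite bodyE_S; case: ifP => Hn1.
  + have Hn1' : n = 1 by lia.
    have Hz : forall z, (sat m (upd rho d z) (buildA c.+1 1 a b d.+1) <-> vb - va <= 1).
      move=> z; case: (IH 1 a b d.+1 m (upd rho d z) (leqnn _) Ha1 Hb1) => HA _.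
      rewrite Eva Evb in HA; apply: HA; rewrite ?AA1; lia.
    split.
    * by case=> w [Hw [_ /Hz]]; lia.
    * move=> H; exists vb; split; first lia.
      split; first lia. by apply/Hz; lia.
  + have Hn2 : 2 <= n by lia.
    have [F4a F4b] := F4 Hn2.
    have Hz : forall z, z <= m -> va < z <= vb ->
        (sat m (upd rho d z) (mux (gM d) (buildA c.+1 (uphalf n) a (TVar d) d.+1)
            (buildA c.+1 n./2 (TVar d) b d.+1)) <-> z - va <= (uphalf n) /\ vb - z <= n./2).
      move=> z Hz /andP[H1 H2].
      case: (IH (uphalf n) a (TVar d) d.+1 m (upd rho d z) ltac:(lia) Ha1 Hd1) => HA1 _.
      case: (IH n./2 (TVar d) b d.+1 m (upd rho d z) ltac:(lia) Hd1 Hb1) => HA2 _.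
      rewrite Eva Evb Evd in HA1 HA2.
      have E1 := HA1 ltac:(lia) ltac:(lia) ltac:(lia).
      have E2 := HA2 ltac:(lia) ltac:(lia) ltac:(lia).
      rewrite -E1 -E2.
      rewrite sat_muxA // !semA // Eva Evb Evd upd_eq.
      split.
      - move=> H; split => u Hu; case: (H u Hu) => [[Hg B]|[Hg B]]; try tauto; left; lia.
      - case=> H1' H2' u Hu; case: (classic (z < u)) => Hzu.
        + right; split; [tauto | exact: H2' u Hu].
        + left; split; [tauto | exact: H1' u Hu].
    split.
    * case=> w [Hw [Hg]]; rewrite Hz //; lia.
    * move=> H; exists (maxn va.+1 (vb - n./2)); split; first lia.
      split; first lia. by apply/Hz; lia.
Qed.

Lemma qprefix_pre f : qprefix f = map fst (pre f).
Proof. by elim: f => //= x g ->. Qed.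

Lemma size_pfx b c d : size (pfx b c d) = c.
Proof. by elim: c b d => //= c IH b d; rewrite IH. Qed.

Lemma path_pfx c : forall b d, path (fun a c => a != c) b (map fst (pfx (~~ b) c d)).
Proof. elim: c => //= c IH b d; rewrite IH andbT; by case: b. Qed.

Lemma alt_pfx b c d : alternating (map fst (pfx b c d)).
Proof. by case: c => //= c; apply: path_pfx. Qed.

Lemma last_pfx c : forall b d x,
  last x (map fst (pfx b c d)) = if c is 0 then x else (if odd c then b else ~~ b).
Proof.
elim: c => //= c IH b d x; rewrite IH.
by case: c {IH} => //= c; case: (odd c); case: b.
Qed.

Lemma ewf_pfx b c d : 0 < c -> ends_with_forall (map fst (pfx b c d)) = if odd c then ~~ b else b.
Proof.
case: c => //= c _; rewrite last_pfx.
by case: c => [|c] /=; [case: b | case: (odd c); case: b].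
Qed.

Theorem mainTheorem4 :
  forall l : nat, 1 <= l ->
  exists sigma : form,
    [/\ sentence sigma, prenex sigma,
        nquant sigma = qstar l,
        alternating (qprefix sigma) && ends_with_forall (qprefix sigma)
      & separates_le_gt l sigma].
Proof.
move=> l Hl.
have Hq : 0 < qstar l by case: (final_num Hl) => [[H1 H2]|[H1 H2]];
  [have := AA_ge1 l | have := EE_ge1 Hl]; lia.
have T0 : tok 0 TMin by []. have T1 : tok 0 TMax by [].
case: (final_num Hl) => [[Hc HA]|[Hc HE]].
- exists (buildA (qstar l) l TMin TMax 0).
  case: (good_build (qstar l) l TMin TMax 0) => /andP[Hp /eqP Hn] _ _ _.
  case: (pre_build (qstar l) l TMin TMax 0) => Hpre _ _ _.
  case: (@fvb_build (qstar l) l TMin TMax 0 T0 T1) => Hf _ _ _.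
  split => //.
  + by move=> x; apply/negP => /Hf.
  + by rewrite Hn Hpre size_pfx.
  + rewrite qprefix_pre Hpre alt_pfx ewf_pfx //.
    by move: Hc; rewrite modn2; case: (odd _).
  + split => m Hm.
    * rewrite /holds (proj1 (@build_ok (qstar l) l TMin TMax 0 m (fun _ => 0) Hl T0 T1)) //= ?subn0;
        lia.
    * rewrite /holds (proj1 (@build_ok (qstar l) l TMin TMax 0 m (fun _ => 0) Hl T0 T1)) //= ?subn0;
        lia.
- exists (buildE (qstar l) l TMin TMax 0).
  case: (good_build (qstar l) l TMin TMax 0) => _ /andP[Hp /eqP Hn] _ _.
  case: (pre_build (qstar l) l TMin TMax 0) => _ Hpre _ _.
  case: (@fvb_build (qstar l) l TMin TMax 0 T0 T1) => _ Hf _ _.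
  split => //.
  + by move=> x; apply/negP => /Hf.
  + by rewrite Hn Hpre size_pfx.
  + rewrite qprefix_pre Hpre alt_pfx ewf_pfx //.
    by move: Hc; rewrite modn2; case: (odd _).
  + split => m Hm.
    * rewrite /holds (proj2 (@build_ok (qstar l) l TMin TMax 0 m (fun _ => 0) Hl T0 T1)) //= ?subn0;
        lia.
    * rewrite /holds (proj2 (@build_ok (qstar l) l TMin TMax 0 m (fun _ => 0) Hl T0 T1)) //= ?subn0;
        lia.
Qed.
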